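(* Let $\{G_N\}_{N\ge1}$ be a sequence of simple graphs, $G_N=(V_N,E_N)$ with $|V_N|=N$, and let $\varepsilon,T>0$. (i) There exist $\varepsilon'>0$ and $n_{\varepsilon'}(N)$ with $n_{\varepsilon'}(N)/N\to0$ as $N\to\infty$, such that if $\textsc{dis}_1(G_N,\varepsilon')/N\to0$ as $N\to\infty$, then $\mathbb P(\Delta^N(I(G_N,n_{\varepsilon'}),T)/N>\varepsilon)\to0$. (ii) There exist $\varepsilon'>0$ and $m_{\varepsilon'}(N)$ with $m_{\varepsilon'}(N)/\sqrt N\to0$ as $N\to\infty$, such that if $\textsc{dis}_2(G_N,\varepsilon')/\sqrt N\to0$ as $N\to\infty$, then $\mathbb P(\Delta^N(I(G_N,m_{\varepsilon'}),T)/\sqrt N>\varepsilon)\to0$.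
   Context: Load balancing on $G_N$: vertices are servers with queues (buffer $b$, possibly infinite); tasks arrive at each server as independent Poisson processes of rate $\lambda$ (in the diffusion setting the per-server rate may be $\lambda(N)/N\le 1$), processing times i.i.d. unit-mean exponential; a task arriving at $v$ goes to a shortest queue in $N[v]=\{v\}\cup\{\text{neighbors of }v\}$. $X_u(G_N,t)$ is the queue length at $u$; $\mathcal S(n)$ is a set of $n$ servers with shortest queues in $G_N$. The scheme $I(G_N,n)$ is coupled with the $G_N$ system: arrival epochs at each server synchronized; servers ordered by nondecreasing queue length and departures at the $k$-th ordered server synchronized. For a task arriving at $v$ at time $t$ assigned in $G_N$ to $v'\in N[v]$: if $\min_{u\in N[v]}X_u(G_N,t)\leq\max_{u\in\mathcal S(n)}X_u(G_N,t)$ (condition ( * )), choose a tie-breaking in which $v'\in\mathcal S(n)$, let $v'$ be $k$-th ordered, and assign the task under $I(G_N,n)$ to the $k$-th ordered server; otherwise assign it under $I(G_N,n)$ uniformly at random to one of the $n+1$ shortest servers. $\Delta^N(I(G_N,n),T)$ is the number of arrivals up to time $T$ for which ( * ) is violated. For $U\subseteq V$: $N[U]=U\cup\{v:\exists u\in U,(u,v)\in E\}$, $\textsc{com}(U)=|V\setminus N[U]|$; $\textsc{dis}_1(G,\varepsilon)=\sup_{|U|\ge\varepsilon|V|}\textsc{com}(U)$, $\textsc{dis}_2(G,\varepsilon)=\sup_{|U|\ge\varepsilon\sqrt{|V|}}\textsc{com}(U)$. *)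

(* Defs.v *)
From Stdlib Require Import Reals.
From Coquelicot Require Import Coquelicot.
From mathcomp Require Import ssreflect ssrbool ssrfun eqtype ssrnat seq
  choice fintype finfun finset bigop.

Set Implicit Arguments.
Unset Strict Implicit.
Unset Printing Implicit Defensive.
Local Open Scope nat_scope.

Definition Rleb (x y : R) : bool := if Rle_dec x y then true else false.

Definition simple_graph (N : nat) (G : rel 'I_N) : Prop :=
  symmetric G /\ irreflexive G.

Definition closed_nbhd (N : nat) (G : rel 'I_N) (v : 'I_N) : {set 'I_N} :=
  [set u | (u == v) || G v u].

Definition nbhd_set (N : nat) (G : rel 'I_N) (U : {set 'I_N}) : {set 'I_N} :=
  [set u | [exists w in U, (u == w) || G w u]].

Definition com (N : nat) (G : rel 'I_N) (U : {set 'I_N}) : nat :=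
  #|~: nbhd_set G U|.

(** dis_1(G, eps) = sup_{|U| >= eps |V|} com(U)  (sup over the empty family := 0). *)
Definition dis1 (N : nat) (G : rel 'I_N) (eps : R) : nat :=
  \max_(U : {set 'I_N} | Rleb (eps * INR N) (INR #|U|)) com G U.

Definition dis2 (N : nat) (G : rel 'I_N) (eps : R) : nat :=
  \max_(U : {set 'I_N} | Rleb (eps * sqrt (INR N)) (INR #|U|)) com G U.

(** Queue-length configurations. *)
Definition state (N : nat) := {ffun 'I_N -> nat}.

(** Buffer: [Some c] = finite buffer c, [None] = infinite buffer. *)
Definition has_room (b : option nat) (k : nat) : bool :=
  match b with Some c => k < c | None => true end.

Definition valid_state (N : nat) (b : option nat) (x : state N) : Prop :=
  match b with Some c => forall u, x u <= c | None => True end.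

Definition minN (N : nat) (G : rel 'I_N) (x : state N) (v : 'I_N) : nat :=
  \big[minn/x v]_(u in closed_nbhd G v) x u.

Definition shortest_set (N : nat) (x : state N) (n : nat) (S : {set 'I_N}) : bool :=
  (#|S| == n) && [forall u in S, forall w in ~: S, x u <= x w].

(** Condition [star] for an arrival at v in configuration x:
    min_{u in N[v]} X_u <= max_{u in S(n)} X_u  (S(n) any set of n shortest queues;
    the maximum does not depend on the choice). *)
Definition cond_star (N : nat) (G : rel 'I_N) (n : nat) (x : state N) (v : 'I_N) : bool :=
  [exists S, shortest_set x n S && (minN G x v <= \max_(u in S) x u)].

Definition inc (N : nat) (x : state N) (u : 'I_N) : state N :=
  [ffun w => if w == u then (x w).+1 else x w].
Definition dec (N : nat) (x : state N) (u : 'I_N) : state N :=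
  [ffun w => if w == u then (x w).-1 else x w].

Definition sumI (N : nat) (f : 'I_N -> R) : R :=
  foldr Rplus 0%R (map f (enum 'I_N)).
Definition sumA (N : nat) (A : {set 'I_N}) (f : 'I_N -> R) : R :=
  foldr Rplus 0%R (map f (enum A)).

(** Uniformized jump chain of the JSQ-on-G_N system (per-server arrival rate lam,
    unit-rate exponential services, ties among shortest queues in N[v] broken
    uniformly at random, tasks blocked when the chosen queue is full).
    Events occur at total rate L = N (lam + 1): an arrival at v with probability
    lam / L, a (potential) service completion at u with probability 1 / L.
    [pviol ... k x c thr] = probability that, starting from configuration x with
    c violations of [star] already counted, after k further events the total number
    of arrivals violating [star] exceeds thr. *)
Fixpoint pviol (N : nat) (G : rel 'I_N) (lam : R) (b : option nat) (n : nat)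
  (thr : R) (k : nat) (x : state N) (c : nat) {struct k} : R :=
  match k with
  | 0 => if Rlt_dec thr (INR c) then 1%R else 0%R
  | k'.+1 =>
    let L := (INR N * (lam + 1))%R in
    (sumI (fun v =>
        let m := minN G x v in
        let c' := (c + ~~ cond_star G n x v)%N in
        let A := [set u in closed_nbhd G v | x u == m] in
        (lam / L *
          (if has_room b m
           then sumA A (fun u => / INR #|A| * pviol G lam b n thr k' (inc x u) c')
           else pviol G lam b n thr k' x c'))%R)
     + sumI (fun u => (/ L * pviol G lam b n thr k' (dec x u) c)%R))%R
  end.

(** P( Delta^N(I(G_N,n), T) > thr ) with G_N started from x0: the number of events
    up to time T is Poisson(L T), independent of the jump chain. *)
Definition prob_exceed (N : nat) (G : rel 'I_N) (lam : R) (b : option nat) (n : nat)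
  (x0 : state N) (T thr : R) : R :=
  let L := (INR N * (lam + 1))%R in
  Series (fun k => (exp (- (L * T)) * (L * T) ^ k / INR (k`!)
                    * pviol G lam b n thr k x0 0)%R).

(* Main.v *)
Require Import Defs.
From Stdlib Require Import Reals Lra Lia ZArith.
From Coquelicot Require Import Coquelicot.
From mathcomp Require Import ssreflect ssrbool ssrfun eqtype ssrnat seq
  choice div fintype finfun finset bigop.
From mathcomp Require Import zify.
From Stdlib Require Import IndefiniteDescription Classical.

Local Open Scope R_scope.

Definition lsum {T : Type} (l : seq T) (f : T -> R) : R := foldr Rplus 0 (map f l).

Lemma lsum_le {T : Type} (l : seq T) f g :
  (forall x, f x <= g x) -> lsum l f <= lsum l g.
Proof. move=> H; rewrite /lsum; elim: l => [|y l IH] /=; [lra| have := H y; lra]. Qed.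

Lemma lsum_plus {T : Type} (l : seq T) f g :
  lsum l (fun x => f x + g x) = lsum l f + lsum l g.
Proof. rewrite /lsum; elim: l => [|y l IH] /=; [lra| rewrite IH; lra]. Qed.

Lemma lsum_scal {T : Type} (l : seq T) c f :
  lsum l (fun x => c * f x) = c * lsum l f.
Proof. rewrite /lsum; elim: l => [|y l IH] /=; [lra| rewrite IH; lra]. Qed.

Lemma lsum_const {T : Type} (l : seq T) c :
  lsum l (fun _ => c) = INR (size l) * c.
Proof. rewrite /lsum; elim: l => [|y l IH] /=; [lra| rewrite IH; case: (size l) => [|m]; rewrite /=; lra]. Qed.

Lemma lsum_ind {T : Type} (l : seq T) (p : pred T) :
  lsum l (fun x => INR (nat_of_bool (p x))) = INR (count p l).
Proof. rewrite /lsum; elim: l => [|y l IH] //=; rewrite IH plus_INR; done. Qed.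

Lemma count_mem_enum N (B : {set 'I_N}) : count (mem B) (enum 'I_N) = #|B|.
Proof. by rewrite cardE -deprecated_filter_index_enum size_filter enumT. Qed.

Lemma avg_bound N (A : {set 'I_N}) (p : 'I_N -> R) B :
  0 <= B -> (forall u, 0 <= p u <= B) ->
  0 <= lsum (enum A) (fun u => / INR #|A| * p u) <= B.
Proof.
move=> HB Hp; rewrite lsum_scal.
have H1 : 0 <= lsum (enum A) p.
  have := lsum_le (enum A) (fun _ => 0) p (fun u => proj1 (Hp u)).
  by rewrite lsum_const; lra.
have H2 : lsum (enum A) p <= INR #|A| * B.
  have := lsum_le (enum A) p (fun _ => B) (fun u => proj2 (Hp u)).
  by rewrite lsum_const -cardE.
case: (posnP #|A|) => HA.
  move: H2; rewrite HA /= => H2.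
  have H3 : lsum (enum A) p = 0 by apply: Rle_antisym => //; move: H2; rewrite Rmult_0_l. rewrite H3.
  rewrite Rmult_0_r; lra.
have HA' : 0 < INR #|A| by apply: lt_0_INR; apply/ltP.
split; first by apply: Rmult_le_pos => //; left; apply: Rinv_0_lt_compat.
apply: (Rle_trans _ (/ INR #|A| * (INR #|A| * B))).
  apply: Rmult_le_compat_l => //; left; apply: Rinv_0_lt_compat => //.
rewrite -Rmult_assoc Rinv_l; lra.
Qed.
Local Close Scope R_scope.
Lemma bigmin_le_seq {I : eqType} (s : seq I) (P : pred I) (F : I -> nat) x0 w :
  w \in s -> P w -> (\big[minn/x0]_(u <- s | P u) F u <= F w)%N.
Proof.
elim: s => [|y s IH] //; rewrite inE big_cons => /orP [/eqP <- ->|ws Pw].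
  exact: geq_minl.
case: (P y); last exact: IH.
exact: leq_trans (geq_minr _ _) (IH ws Pw).
Qed.

Lemma minN_le N (G : rel 'I_N) (x : state N) v w :
  w \in closed_nbhd G v -> (minN G x v <= x w)%N.
Proof. by move=> Hw; apply: bigmin_le_seq => //; rewrite mem_index_enum. Qed.

Lemma shortest_exists N (x : state N) n : (n <= N)%N -> exists S, shortest_set x n S.
Proof.
elim: n => [|n IH] Hn.
  exists set0; rewrite /shortest_set cards0 eqxx /=.
  by apply/forallP => u; apply/implyP; rewrite inE.
have [S /andP [/eqP HS /forallP HSx]] := IH (ltnW Hn).
have : (0 < #|~: S|)%N by rewrite cardsCs setCK card_ord HS; lia.
case/card_gt0P => w0 Hw0.
case: (arg_minnP x Hw0) => w1 Hw1 Hmin.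
exists (w1 |: S); apply/andP; split.
  have Hw1' : w1 \in ~: S := Hw1. by rewrite cardsU1 HS; move: Hw1'; rewrite inE => ->.
apply/forallP => u; apply/implyP => Hu; apply/forallP => w; apply/implyP.
rewrite in_setC in_setU1 negb_or => /andP [Hw1w HwS].
move: Hu; rewrite in_setU1 => /orP [/eqP ->|HuS].
  by apply: Hmin; change (w \in ~: S); rewrite in_setC.
by move: (HSx u); rewrite HuS /= => /forallP /(_ w); rewrite inE HwS.
Qed.


Lemma viol_count N (G : rel 'I_N) n (x : state N) D :
  symmetric G -> (n <= N)%N -> (forall U : {set 'I_N}, (n <= #|U|)%N -> (com G U <= D)%N) ->
  (count (fun v => ~~ cond_star G n x v) (enum 'I_N) <= D)%N.
Proof.
move=> Hsym Hn HD.
have [S HS] := @shortest_exists N x n Hn.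
have HSc : (n <= #|S|)%N by case/andP: HS => /eqP ->.
apply: leq_trans (HD S HSc).
rewrite /com -count_mem_enum.
apply: sub_count => v /= Hv.
rewrite in_setC; apply/negP => Hin; move/negP: Hv; apply.
apply/existsP; exists S; rewrite HS /=.
move: Hin; rewrite inE => /existsP [w /andP [HwS Hvw]].
apply: leq_trans (leq_bigmax_cond _ HwS).
apply: minN_le; rewrite inE.
case/orP: Hvw => [/eqP ->|Hg]; first by rewrite eqxx.
by rewrite Hsym Hg orbT.
Qed.
Local Open Scope R_scope.

Lemma lsum_ext {T : Type} (l : seq T) f g :
  (forall x, f x = g x) -> lsum l f = lsum l g.
Proof. move=> H; rewrite /lsum; elim: l => [|y l IH] //=; rewrite IH H //. Qed.

Lemma pviol_bound N (G : rel 'I_N) lam b n thr D :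
  (0 < N)%N -> 0 < lam -> 0 < thr ->
  (forall x : state N, (count (fun v => ~~ cond_star G n x v) (enum 'I_N) <= D)%N) ->
  forall k x c, 0 <= pviol G lam b n thr k x c <=
     (INR c + INR k * (lam * INR D / (INR N * (lam + 1)))) / thr.
Proof.
move=> HN Hl Ht HD.
have HN' : 0 < INR N by apply: lt_0_INR; apply/ltP.
set L := INR N * (lam + 1).
have HL : 0 < L by rewrite /L; nra.
set a := lam * INR D / L.
have Ha : 0 <= a by rewrite /a; apply: Rmult_le_pos; [apply: Rmult_le_pos; [lra|apply: pos_INR]|left; apply: Rinv_0_lt_compat].
have Hc0 : forall c, 0 <= INR c / thr by move=> c; apply: Rmult_le_pos; [apply: pos_INR|left; apply: Rinv_0_lt_compat].
elim=> [|k IH] x c.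
  rewrite /=; case: Rlt_dec => Hlt /=.
    split; first lra.
    rewrite Rmult_0_l Rplus_0_r; apply: (Rmult_le_reg_r thr) => //.
    rewrite /Rdiv Rmult_assoc Rinv_l; lra.
  rewrite Rmult_0_l Rplus_0_r; split; [lra|apply: Hc0].
set Bc := (INR c + INR k * a) / thr.
have HBc : 0 <= Bc by rewrite /Bc; apply: Rmult_le_pos; [have := pos_INR c; have := pos_INR k; nra|left; apply: Rinv_0_lt_compat].
have Hll : 0 <= lam / L by apply: Rmult_le_pos; [lra|left; apply: Rinv_0_lt_compat].
have HiL : 0 <= / L by left; apply: Rinv_0_lt_compat.
have Hv : forall c' x', 0 <= pviol G lam b n thr k x' c' <= (INR c' + INR k * a) / thr := fun c' x' => IH x' c'.
simpl pviol.
rewrite -/L.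
split.
  apply: Rplus_le_le_0_compat.
    have := lsum_le (enum 'I_N) (fun _ => 0) _ _; rewrite lsum_const Rmult_0_r; apply => v.
    apply: Rmult_le_pos => //; case: has_room; last exact: (proj1 (Hv _ _)).
    apply: (proj1 (@avg_bound _ _ _ _ _ (fun u => Hv _ (inc x u)))).
    apply: Rmult_le_pos; [have := pos_INR k; have := pos_INR (c + ~~ cond_star G n x v); nra|left; apply: Rinv_0_lt_compat => //].
  have := lsum_le (enum 'I_N) (fun _ => 0) _ _; rewrite lsum_const Rmult_0_r; apply => u.
  by apply: Rmult_le_pos => //; case: (Hv c (dec x u)).
apply: (Rle_trans _ (lsum (enum 'I_N) (fun v => lam / L * Bc + lam / L / thr * INR (nat_of_bool (~~ cond_star G n x v)))
   + lsum (enum 'I_N) (fun u => / L * Bc))).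
  apply: Rplus_le_compat; apply: lsum_le => v.
    have -> : lam / L * Bc + lam / L / thr * INR (~~ cond_star G n x v) =
              lam / L * ((INR (c + ~~ cond_star G n x v) + INR k * a) / thr).
      by rewrite plus_INR /Bc; field; lra.
    apply: Rmult_le_compat_l => //; case: has_room; last exact: (proj2 (Hv _ _)).
    apply: (proj2 (@avg_bound _ _ _ _ _ (fun u => Hv _ (inc x u)))).
    apply: Rmult_le_pos; [have := pos_INR k; have := pos_INR (c + ~~ cond_star G n x v); nra|left; apply: Rinv_0_lt_compat => //].
  apply: Rmult_le_compat_l => //; exact: (proj2 (Hv _ _)).
rewrite lsum_plus !lsum_const lsum_scal lsum_ind size_enum_ord.
have HcD := le_INR _ _ (elimT leP (HD x)).
have -> : INR k.+1 = INR k + 1 by rewrite S_INR.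
have -> : (INR c + (INR k + 1) * a) / thr = Bc + a / thr by rewrite /Bc; field; lra.
have -> : INR N * (lam / L * Bc) + lam / L / thr * INR (count (fun v => ~~ cond_star G n x v) (enum 'I_N)) + INR N * (/ L * Bc)
  = Bc + lam / L / thr * INR (count (fun v => ~~ cond_star G n x v) (enum 'I_N)).
  rewrite /L; field; lra.
apply: Rplus_le_compat_l.
rewrite /a /Rdiv.
have : 0 <= lam * / L * / thr by apply: Rmult_le_pos => //; left; apply: Rinv_0_lt_compat.
nra.
Qed.

Lemma fact_eq k : (k`!)%N = Factorial.fact k.
Proof. elim: k => [|k IH] //; rewrite factS IH /=. by rewrite -multE. Qed.

Lemma poisson_series mu :
  is_series (fun k => exp (- mu) * mu ^ k / INR (k`!)) 1 /\
  is_series (fun k => exp (- mu) * mu ^ k / INR (k`!) * INR k) mu.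
Proof.
have H0 : is_series (fun k => exp (- mu) * mu ^ k / INR (k`!)) 1.
  have := is_exp_Reals mu; rewrite is_pseries_R => H.
  have := is_series_scal (exp (- mu)) _ _ H.
  rewrite /scal /= /mult /= -exp_plus Rplus_opp_l exp_0.
  move=> H1; apply: (is_series_ext _ _ _ _ H1) => k; rewrite fact_eq /Rdiv; match goal with |- ?a = ?b => change (@eq R a b) end; field; apply: INR_fact_neq_0.
refine (conj H0 _).
eapply is_series_decr_1.
rewrite /opp /plus /= Rmult_0_r Ropp_0 Rplus_0_r.
have := is_series_scal mu _ _ H0; rewrite /scal /= /mult /= Rmult_1_r.
move=> H1; apply: (is_series_ext _ _ _ _ H1) => k.
rewrite factS mult_INR -/(INR k.+1) /=.
have Hk : INR k.+1 <> 0 by apply: not_0_INR.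
have Hf : INR (k`!) <> 0 by rewrite fact_eq; apply: INR_fact_neq_0.
change (match k with 0%N => 1 | _.+1 => INR k + 1 end) with (INR k.+1).
match goal with |- ?a = ?b => change (@eq R a b) end; field; split => //.
Qed.

Lemma prob_bound N (G : rel 'I_N) lam b n (x0 : state N) T thr D :
  (0 < N)%N -> 0 < lam -> 0 < T -> 0 < thr ->
  (forall x : state N, (count (fun v => ~~ cond_star G n x v) (enum 'I_N) <= D)%N) ->
  0 <= prob_exceed G lam b n x0 T thr <= lam * T * INR D / thr.
Proof.
move=> HN Hl HT Ht HD.
have HN' : 0 < INR N by apply: lt_0_INR; apply/ltP.
have Hpv := @pviol_bound N G lam b n thr D HN Hl Ht HD.
rewrite /prob_exceed.
set L := INR N * (lam + 1).
have HL : 0 < L by rewrite /L; nra.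
set a := lam * INR D / L.
have [Hs0 Hs1] := poisson_series (L * T).
set w := fun k => exp (- (L * T)) * (L * T) ^ k / INR (k`!).
have Hw : forall k, 0 <= w k.
  move=> k; rewrite /w; apply: Rmult_le_pos; [apply: Rmult_le_pos; [left; apply: exp_pos|apply: pow_le; nra]|].
  left; apply: Rinv_0_lt_compat; rewrite fact_eq; apply: INR_fact_lt_0.
set s := fun k => w k * pviol G lam b n thr k x0 0.
set bb := fun k => a / thr * (w k * INR k).
have Hsb : forall k, 0 <= s k <= bb k.
  move=> k; have [H1 H2] := Hpv k x0 0%N; rewrite /s /bb; split.
    exact: Rmult_le_pos.
  apply: (Rle_trans _ (w k * ((INR 0 + INR k * a) / thr))).
    exact: Rmult_le_compat_l.
  rewrite /=; right; field; lra.
have Hbs : is_series bb (a / thr * (L * T)).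
  exact: (is_series_scal (a / thr) _ _ Hs1).
have Hbe : ex_series bb by exists (a / thr * (L * T)).
have Hse : ex_series s.
  apply: (ex_series_le _ bb) => // k.
  rewrite /norm /= /abs /= Rabs_pos_eq; [exact: (proj2 (Hsb k))|exact: (proj1 (Hsb k))].
change (0 <= Series s <= lam * T * INR D / thr).
split.
  have := Series_scal_l 0 s; rewrite Rmult_0_l => <-.
  apply: Series_le => // k; have := Hsb k; lra.
apply: (Rle_trans _ (Series bb)); first exact: Series_le.
rewrite (is_series_unique _ _ Hbs) /a; right; field; lra.
Qed.

Section Diag.
Variable f : nat -> nat -> R.
Hypothesis Hf : forall k, is_lim_seq (f k) 0.

Lemma exM k : exists M, forall N, (M <= N)%N -> Rabs (f k N) < / INR k.+1.
Proof.
have Hp : 0 < / INR k.+1 by apply: Rinv_0_lt_compat; apply: lt_0_INR; lia.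
have := proj2 (is_lim_seq_spec _ _) (Hf k) (mkposreal _ Hp).
case=> M HM; exists M => N HN; have := HM N (elimT leP HN); rewrite /= Rminus_0_r //.
Qed.

Definition Mk k : nat := proj1_sig (constructive_indefinite_description _ (exM k)).
Lemma MkP k N : (Mk k <= N)%N -> Rabs (f k N) < / INR k.+1.
Proof. rewrite /Mk; case: constructive_indefinite_description => M HM /=; exact: HM. Qed.

Fixpoint kk (N : nat) : nat :=
  match N with
  | 0%N => 0%N
  | N'.+1 => if (Mk (kk N').+1 <= N'.+1)%N then (kk N').+1 else kk N'
  end.

Lemma kk_inv N : kk N = 0%N \/ (Mk (kk N) <= N)%N.
Proof.
elim: N => [|N IH] /=; first by left.
case: ifP => H; first by right.
case: IH => [->|H']; [left|right] => //; lia.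
Qed.

Lemma kk_mono N N' : (N <= N')%N -> (kk N <= kk N')%N.
Proof.
elim: N' => [|N' IH]; first by rewrite leqn0 => /eqP ->.
rewrite leq_eqVlt => /orP [/eqP ->//|H].
have := IH H; rewrite /=; case: ifP => _; lia.
Qed.

Lemma kk_grow j : exists N0, forall N, (N0 <= N)%N -> (j <= kk N)%N.
Proof.
elim: j => [|j [N0 IH]]; first by exists 0%N.
exists (maxn N0 (Mk j.+1)).+1 => N HN.
apply: (leq_trans _ (@kk_mono _ _ HN)).
have Hj := IH (maxn N0 (Mk j.+1)) (leq_maxl _ _).
rewrite /=; case: ifP => H; first lia.
have : kk (maxn N0 (Mk j.+1)) <> j.
  by move=> E; move: H; rewrite E; have := leq_maxr N0 (Mk j.+1); lia.
lia.
Qed.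

Lemma kk_bound N : (1 <= kk N)%N -> Rabs (f (kk N) N) < / INR (kk N).+1.
Proof. move=> H; case: (kk_inv N) => [E|]; [by rewrite E in H|exact: MkP]. Qed.

Lemma kk_lim : is_lim_seq (fun N => / INR (kk N).+1) 0.
Proof.
apply/is_lim_seq_spec => eps.
have [j Hj] : exists j : nat, / eps < INR j.
  have [H1 _] := archimed (/ eps); exists (Z.to_nat (up (/ eps))).
  rewrite INR_IZR_INZ Z2Nat.id //; apply: le_IZR; have := Rinv_0_lt_compat _ (cond_pos eps); lra.
have [N0 HN0] := kk_grow j.
exists N0 => N HN; have := HN0 N (introT leP HN) => Hjk.
have Hpos : 0 < INR (kk N).+1 by apply: lt_0_INR; lia.
rewrite Rminus_0_r Rabs_pos_eq; last by left; apply: Rinv_0_lt_compat.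
have He := cond_pos eps.
have : INR j <= INR (kk N) by apply: le_INR; apply/leP.
rewrite S_INR => Hle.
have := pos_INR (kk N) => Hkp.
apply: (Rmult_lt_reg_l (INR (kk N) + 1)); first lra.
rewrite Rinv_r; last lra.
have : 1 < INR j * eps.
  have := Rmult_lt_compat_r eps _ _ He Hj; rewrite Rinv_l; lra.
nra.
Qed.

End Diag.

Lemma Rleb_true x y : x <= y -> Rleb x y.
Proof. by rewrite /Rleb; case: Rle_dec. Qed.

Lemma com_le_dis1 N (G : rel 'I_N) d (U : {set 'I_N}) :
  d * INR N <= INR #|U| -> (com G U <= dis1 G d)%N.
Proof. move=> H; rewrite /dis1; apply: (leq_bigmax_cond (P := fun U => Rleb _ _)); exact: Rleb_true. Qed.

Lemma com_le_dis2 N (G : rel 'I_N) d (U : {set 'I_N}) :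
  d * sqrt (INR N) <= INR #|U| -> (com G U <= dis2 G d)%N.
Proof. move=> H; rewrite /dis2; apply: (leq_bigmax_cond (P := fun U => Rleb _ _)); exact: Rleb_true. Qed.

Lemma INR_le_nat m n : (m <= n)%N -> INR m <= INR n.
Proof. by move=> H; apply: le_INR; apply/leP. Qed.

Lemma ceil_bound x k : INR x.+1 <= INR ((x %/ k.+1).+1 * k.+1).
Proof. apply: INR_le_nat; exact: ltn_ceil. Qed.

Lemma ceil_boundR x k : (INR x + 1) * / INR k.+1 <= INR (x %/ k.+1 + 1).
Proof.
have Hk : 0 < INR k.+1 by apply: lt_0_INR; lia.
have := ceil_bound x k; rewrite mult_INR addn1 => H.
apply: (Rmult_le_reg_r (INR k.+1)) => //.
rewrite Rmult_assoc Rinv_l; last lra.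
by rewrite Rmult_1_r -S_INR.

Qed.

Lemma floor_boundR x k : INR (x %/ k.+1) <= INR x * / INR k.+1.
Proof.
have Hk : 0 < INR k.+1 by apply: lt_0_INR; lia.
have := @INR_le_nat _ _ (leq_trunc_div x k.+1); rewrite mult_INR => H.
apply: (Rmult_le_reg_r (INR k.+1)) => //.
rewrite Rmult_assoc Rinv_l; lra.
Qed.

Lemma div_le_self x k : (1 <= k)%N -> (1 <= x)%N -> (x %/ k.+1 + 1 <= x)%N.
Proof.
move=> Hk Hx; have := leq_div2l x (isT : (0 < 2)%N) (Hk : (2 <= k.+1)%N).
have : (x %/ 2 * 2 <= x)%N := leq_trunc_div x 2.
lia.
Qed.

Lemma lim_invINR : is_lim_seq (fun N => / INR N) 0.
Proof. have := is_lim_seq_inv _ _ is_lim_seq_INR; apply => //. Qed.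

Lemma lim_invsqrt : is_lim_seq (fun N => / sqrt (INR N)) 0.
Proof.
apply/is_lim_seq_spec => eps.
have He := cond_pos eps.
have He2 : 0 < eps * eps by nra.
have [M HM] := proj2 (is_lim_seq_spec _ _) lim_invINR (mkposreal _ He2).
exists (maxn M 1) => N HN.
have HN1 : (1 <= N)%N by apply: leq_trans (leq_maxr M 1) _; apply/leP.
have HNM : (M <= N)%coq_nat by apply/leP; apply: leq_trans (leq_maxl M 1) _; apply/leP.
have := HM N HNM; rewrite /= !Rminus_0_r.
have HNp : 0 < INR N by apply: lt_0_INR; apply/ltP.
have Hs : 0 < sqrt (INR N) by apply: sqrt_lt_R0.
rewrite !Rabs_pos_eq; [|left; apply: Rinv_0_lt_compat => //|left; apply: Rinv_0_lt_compat => //].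
move=> H; rewrite -sqrt_inv.
rewrite -(sqrt_Rsqr eps); last lra.
apply: sqrt_lt_1_alt; split; [left; apply: Rinv_0_lt_compat => //|rewrite /Rsqr //].
Qed.

Lemma lim_zero_fun (g : nat -> R) : (forall N, g N = 0) -> is_lim_seq g 0.
Proof. move=> H; apply: (is_lim_seq_ext (fun _ => 0)); [by move=> N; rewrite H|exact: is_lim_seq_const]. Qed.

Lemma lim_scal0 (u : nat -> R) c : is_lim_seq u 0 -> is_lim_seq (fun N => c * u N) 0.
Proof. move=> H; have := is_lim_seq_scal_l _ c _ H; rewrite /= Rmult_0_r //. Qed.

Lemma part1 (G : forall N : nat, rel 'I_N) :
  (forall N, simple_graph (G N)) ->
  forall (b : option nat) (eps T : R), (0 < eps)%R -> (0 < T)%R ->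
  forall (lam : R) (x0 : forall N : nat, state N),
     (0 < lam)%R ->
     exists (eps' : R) (n : nat -> nat),
       (0 < eps')%R /\
       is_lim_seq (fun N => (INR (n N) / INR N)%R) 0%R /\
       (is_lim_seq (fun N => (INR (dis1 (G N) eps') / INR N)%R) 0%R ->
        is_lim_seq (fun N => prob_exceed (G N) lam b (n N) (x0 N) T (eps * INR N)%R) 0%R).
Proof.
move=> HG b eps T He HT lam x0 Hl.
case: (classic (forall d, 0 < d -> is_lim_seq (fun N => INR (dis1 (G N) d) / INR N) 0)) => Hall; last first.
  have [d Hd] := not_all_ex_not _ _ Hall.
  have [Hd0 Hd1] := imply_to_and _ _ Hd.
  exists d, (fun _ => 0%N); split => //; split; last by move=> H; case: Hd1.
  by apply: lim_zero_fun => N; rewrite /= /Rdiv Rmult_0_l.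
set f := fun k N => INR (dis1 (G N) (/ INR k.+1)) / INR N.
have Hf : forall k, is_lim_seq (f k) 0.
  by move=> k; apply: Hall; apply: Rinv_0_lt_compat; apply: lt_0_INR; lia.
set K := kk f Hf.
have [N1 HN1] := kk_grow f Hf 1.
exists 1, (fun N => N %/ (K N).+1 + 1)%N; split; first lra; split.
  apply: (is_lim_seq_le_le_loc (fun _ => 0) _ (fun N => / INR (K N).+1 + / INR N)).
  - exists 1%N => N HN.
    have HNp : 0 < INR N by apply: lt_0_INR.
    have Hk : 0 < INR (K N).+1 by apply: lt_0_INR; lia.
    rewrite plus_INR /Rdiv Rmult_plus_distr_r /= Rmult_1_l.
    have := floor_boundR N (K N) => Hfl.
    have Hpos := pos_INR (N %/ (K N).+1).
    split.
      apply: Rplus_le_le_0_compat; last by left; apply: Rinv_0_lt_compat.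
      by apply: Rmult_le_pos => //; left; apply: Rinv_0_lt_compat.
    apply: Rplus_le_compat_r.
    apply: (Rle_trans _ (INR N * / INR (K N).+1 * / INR N)).
      by apply: Rmult_le_compat_r => //; left; apply: Rinv_0_lt_compat.
    right; rewrite (Rmult_comm (INR N)) Rmult_assoc Rinv_r; [by rewrite Rmult_1_r|lra].
  - exact: is_lim_seq_const.
  - have := is_lim_seq_plus' _ _ _ _ (kk_lim f Hf) lim_invINR; rewrite Rplus_0_r //.
move=> _.
apply: (is_lim_seq_le_le_loc (fun _ => 0) _ (fun N => lam * T / eps * / INR (K N).+1)).
- exists (maxn N1 1) => N HN.
  have HN1' : (1 <= N)%N by apply: leq_trans (leq_maxr N1 1) _; apply/leP.
  have HKN : (1 <= K N)%N by apply: HN1; apply: leq_trans (leq_maxl N1 1) _; apply/leP.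
  have HNp : 0 < INR N by apply: lt_0_INR; apply/leP.
  have Hk : 0 < INR (K N).+1 by apply: lt_0_INR; lia.
  have Hthr : 0 < eps * INR N by nra.
  have Hsym : symmetric (G N) by case: (HG N).
  have HnN : (N %/ (K N).+1 + 1 <= N)%N by apply: div_le_self.
  have Hcnt : forall x : state N,
     (count (fun v => ~~ cond_star (G N) (N %/ (K N).+1 + 1) x v) (enum 'I_N)
       <= dis1 (G N) (/ INR (K N).+1))%N.
    move=> x; apply: viol_count => // U HU.
    apply: com_le_dis1.
    apply: (Rle_trans _ (INR (N %/ (K N).+1 + 1))); last exact: INR_le_nat.
    apply: (Rle_trans _ ((INR N + 1) * / INR (K N).+1)); last exact: ceil_boundR.
    rewrite Rmult_comm; apply: Rmult_le_compat_r; [left; apply: Rinv_0_lt_compat => //|lra].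
  have [Hb0 Hb1] := @prob_bound N (G N) lam b _ (x0 N) T (eps * INR N) _ HN1' Hl HT Hthr Hcnt.
  split => //; apply: (Rle_trans _ _ _ Hb1).
  have := kk_bound f Hf N HKN; rewrite -/K /f => Hkb.
  have Hdpos := pos_INR (dis1 (G N) (/ INR (K N).+1)).
  have Hfle : INR (dis1 (G N) (/ INR (K N).+1)) / INR N <= / INR (K N).+1.
    by apply: Rlt_le; apply: Rle_lt_trans (Rle_abs _) Hkb.
  have -> : lam * T * INR (dis1 (G N) (/ INR (K N).+1)) / (eps * INR N) =
            lam * T / eps * (INR (dis1 (G N) (/ INR (K N).+1)) / INR N) by field; lra.
  apply: Rmult_le_compat_l => //.
  apply: Rmult_le_pos; [nra|left; apply: Rinv_0_lt_compat => //].
- exact: is_lim_seq_const.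
- exact: lim_scal0 (kk_lim f Hf).
Qed.

Lemma sqrt_facts N : (1 <= N)%N ->
  (1 <= Nat.sqrt N)%N /\ (Nat.sqrt N <= N)%N /\
  INR (Nat.sqrt N) <= sqrt (INR N) /\ sqrt (INR N) < INR (Nat.sqrt N) + 1.
Proof.
move=> HN.
have [H1 H2] := Nat.sqrt_spec N (Nat.le_0_l N).
have H3 := Nat.sqrt_le_lin N.
set s := Nat.sqrt N in H1 H2 H3 *.
have H1' : (s * s <= N)%N by apply/leP; rewrite -multE.
have H2' : (N < s.+1 * s.+1)%N by apply/ltP; rewrite -multE.
split; first by clearbody s; nia.
split; first by apply/leP.
have Hs := pos_INR s.
split.
  rewrite -{1}(sqrt_square (INR s)) //; apply: sqrt_le_1_alt.
  rewrite -mult_INR; exact: INR_le_nat.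
rewrite -(sqrt_square (INR s + 1)); last lra.
apply: sqrt_lt_1_alt; split; first exact: pos_INR.
rewrite -S_INR -mult_INR; apply: lt_INR; apply/ltP; exact: H2'.
Qed.

Lemma part2 (G : forall N : nat, rel 'I_N) :
  (forall N, simple_graph (G N)) ->
  forall (b : option nat) (eps T : R), (0 < eps)%R -> (0 < T)%R ->
  forall (lam : nat -> R) (x0 : forall N : nat, state N),
     (forall N, 0 < lam N <= 1)%R ->
     exists (eps' : R) (m : nat -> nat),
       (0 < eps')%R /\
       is_lim_seq (fun N => (INR (m N) / sqrt (INR N))%R) 0%R /\
       (is_lim_seq (fun N => (INR (dis2 (G N) eps') / sqrt (INR N))%R) 0%R ->
        is_lim_seq (fun N => prob_exceed (G N) (lam N) b (m N) (x0 N) T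
                               (eps * sqrt (INR N))%R) 0%R).
Proof.
move=> HG b eps T He HT lam x0 Hl.
case: (classic (forall d, 0 < d -> is_lim_seq (fun N => INR (dis2 (G N) d) / sqrt (INR N)) 0)) => Hall; last first.
  have [d Hd] := not_all_ex_not _ _ Hall.
  have [Hd0 Hd1] := imply_to_and _ _ Hd.
  exists d, (fun _ => 0%N); split => //; split; last by move=> H; case: Hd1.
  by apply: lim_zero_fun => N; rewrite /= /Rdiv Rmult_0_l.
set f := fun k N => INR (dis2 (G N) (/ INR k.+1)) / sqrt (INR N).
have Hf : forall k, is_lim_seq (f k) 0.
  by move=> k; apply: Hall; apply: Rinv_0_lt_compat; apply: lt_0_INR; lia.
set K := kk f Hf.
have [N1 HN1] := kk_grow f Hf 1.
exists 1, (fun N => Nat.sqrt N %/ (K N).+1 + 1)%N; split; first lra; split.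
  apply: (is_lim_seq_le_le_loc (fun _ => 0) _ (fun N => / INR (K N).+1 + / sqrt (INR N))).
  - exists 1%N => N HN.
    have HN' : (1 <= N)%N by apply/leP.
    have [_ [_ [Hs1 Hs2]]] := @sqrt_facts N HN'.
    have HNp : 0 < INR N by apply: lt_0_INR.
    have HsN : 0 < sqrt (INR N) by apply: sqrt_lt_R0.
    have Hk : 0 < INR (K N).+1 by apply: lt_0_INR; lia.
    rewrite plus_INR /Rdiv Rmult_plus_distr_r /= Rmult_1_l.
    have := floor_boundR (Nat.sqrt N) (K N) => Hfl.
    have Hpos := pos_INR (Nat.sqrt N %/ (K N).+1).
    split.
      apply: Rplus_le_le_0_compat; last by left; apply: Rinv_0_lt_compat.
      by apply: Rmult_le_pos => //; left; apply: Rinv_0_lt_compat.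
    apply: Rplus_le_compat_r.
    apply: (Rle_trans _ (sqrt (INR N) * / INR (K N).+1 * / sqrt (INR N))).
      apply: Rmult_le_compat_r; first by left; apply: Rinv_0_lt_compat.
      apply: (Rle_trans _ _ _ Hfl); apply: Rmult_le_compat_r => //; left; apply: Rinv_0_lt_compat => //.
    right; rewrite (Rmult_comm (sqrt (INR N))) Rmult_assoc Rinv_r; [by rewrite Rmult_1_r|lra].
  - exact: is_lim_seq_const.
  - have := is_lim_seq_plus' _ _ _ _ (kk_lim f Hf) lim_invsqrt; rewrite Rplus_0_r //.
move=> _.
apply: (is_lim_seq_le_le_loc (fun _ => 0) _ (fun N => T / eps * / INR (K N).+1)).
- exists (maxn N1 1) => N HN.
  have HN1' : (1 <= N)%N by apply: leq_trans (leq_maxr N1 1) _; apply/leP.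
  have HKN : (1 <= K N)%N by apply: HN1; apply: leq_trans (leq_maxl N1 1) _; apply/leP.
  have [Hs0 [HsN [Hs1 Hs2]]] := @sqrt_facts N HN1'.
  have HNp : 0 < INR N by apply: lt_0_INR; apply/leP.
  have HsNp : 0 < sqrt (INR N) by apply: sqrt_lt_R0.
  have Hk : 0 < INR (K N).+1 by apply: lt_0_INR; lia.
  have Hthr : 0 < eps * sqrt (INR N) by nra.
  have Hsym : symmetric (G N) by case: (HG N).
  have HnN : (Nat.sqrt N %/ (K N).+1 + 1 <= N)%N.
    exact: (leq_trans (@div_le_self _ _ HKN Hs0) HsN).
  have Hcnt : forall x : state N,
     (count (fun v => ~~ cond_star (G N) (Nat.sqrt N %/ (K N).+1 + 1) x v) (enum 'I_N)
       <= dis2 (G N) (/ INR (K N).+1))%N.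
    move=> x; apply: viol_count => // U HU.
    apply: com_le_dis2.
    apply: (Rle_trans _ (INR (Nat.sqrt N %/ (K N).+1 + 1))); last exact: INR_le_nat.
    apply: (Rle_trans _ ((INR (Nat.sqrt N) + 1) * / INR (K N).+1)); last exact: ceil_boundR.
    rewrite Rmult_comm; apply: Rmult_le_compat_r; [left; apply: Rinv_0_lt_compat => //|lra].
  have [Hl0 Hl1] := Hl N.
  have [Hb0 Hb1] := @prob_bound N (G N) (lam N) b _ (x0 N) T (eps * sqrt (INR N)) _ HN1' Hl0 HT Hthr Hcnt.
  split => //; apply: (Rle_trans _ _ _ Hb1).
  have := kk_bound f Hf N HKN; rewrite -/K /f => Hkb.
  have Hdpos := pos_INR (dis2 (G N) (/ INR (K N).+1)).
  have Hfle : INR (dis2 (G N) (/ INR (K N).+1)) / sqrt (INR N) <= / INR (K N).+1.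
    by apply: Rlt_le; apply: Rle_lt_trans (Rle_abs _) Hkb.
  have Hf0 : 0 <= INR (dis2 (G N) (/ INR (K N).+1)) / sqrt (INR N).
    by apply: Rmult_le_pos => //; left; apply: Rinv_0_lt_compat.
  have -> : lam N * T * INR (dis2 (G N) (/ INR (K N).+1)) / (eps * sqrt (INR N)) =
            lam N * (T / eps * (INR (dis2 (G N) (/ INR (K N).+1)) / sqrt (INR N))) by field; lra.
  have HTe : 0 < T / eps by apply: Rdiv_lt_0_compat.
  apply: (Rle_trans _ (1 * (T / eps * (INR (dis2 (G N) (/ INR (K N).+1)) / sqrt (INR N))))).
    apply: Rmult_le_compat_r => //; nra.
  rewrite Rmult_1_l; apply: Rmult_le_compat_l => //; lra.
- exact: is_lim_seq_const.
- exact: lim_scal0 (kk_lim f Hf).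
Qed.

Theorem proposition3p5 :
  forall (G : forall N : nat, rel 'I_N),
  (forall N, simple_graph (G N)) ->
  forall (b : option nat),
  (forall c, b = Some c -> (1 <= c)%N) ->
  forall (eps T : R), (0 < eps)%R -> (0 < T)%R ->
  (* (i) fluid scale, fixed per-server arrival rate lam *)
  (forall (lam : R) (x0 : forall N : nat, state N),
     (0 < lam)%R -> (forall N, valid_state b (x0 N)) ->
     exists (eps' : R) (n : nat -> nat),
       (0 < eps')%R /\
       is_lim_seq (fun N => (INR (n N) / INR N)%R) 0%R /\
       (is_lim_seq (fun N => (INR (dis1 (G N) eps') / INR N)%R) 0%R ->
        is_lim_seq (fun N => prob_exceed (G N) lam b (n N) (x0 N) T (eps * INR N)%R) 0%R))
  /\
  (* (ii) diffusion scale, per-server arrival rate lam N = lambda(N)/N <= 1 *)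
  (forall (lam : nat -> R) (x0 : forall N : nat, state N),
     (forall N, 0 < lam N <= 1)%R -> (forall N, valid_state b (x0 N)) ->
     exists (eps' : R) (m : nat -> nat),
       (0 < eps')%R /\
       is_lim_seq (fun N => (INR (m N) / sqrt (INR N))%R) 0%R /\
       (is_lim_seq (fun N => (INR (dis2 (G N) eps') / sqrt (INR N))%R) 0%R ->
        is_lim_seq (fun N => prob_exceed (G N) (lam N) b (m N) (x0 N) T
                               (eps * sqrt (INR N))%R) 0%R)).
Proof.
move=> G HG b _ eps T He HT; split.
  by move=> lam x0 Hl _; apply: part1.
by move=> lam x0 Hl _; apply: part2.
Qed.
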